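(* Let $K$ be a construction of an ASC-hypergraph $H$ and let $Y\in H\setminus K$. Then there is $X\in K$ with $Y\subsetneq X$ such that some $X$-superficial element $x$ (relative to $K$) satisfies $x\in Y$.
   Context: A hypergraph is a finite set $H$ of nonempty subsets of some finite set; its carrier is $\bigcup H$. For a family $F$ and set $Y$, $F_Y=\{X\in F\mid X\subseteq Y\}$. A hypergraph partition of $H$ is a partition $\{H_1,\dots,H_n\}$ ($n\ge0$) of the set $H$ with $\{\bigcup H_1,\dots,\bigcup H_n\}$ a partition of $\bigcup H$; $H$ is connected if it has exactly one hypergraph partition; the finest hypergraph partition is the unique one whose blocks are connected. $H$ is atomic if $\{x\}\in H$ for all $x\in\bigcup H$; saturated if $X_1,X_2\in H$ with $X_1\cap X_2\neq\emptyset$ imply $X_1\cup X_2\in H$. An ASC-hypergraph is one that is atomic, saturated and connected. Constructions of an atomic $H$, by induction on $|\bigcup H|$: (0) $\emptyset$ is the only construction of $\emptyset$; (1) if $|\bigcup H|\ge1$, $H$ connected, $x\in\bigcup H$, $K$ a construction of $H_{\bigcup H\setminus\{x\}}$, then $K\cup\{\bigcup H\}$ is a construction of $H$; (2) if $H$ is not connected with finest hypergraph partition $\{H_1,\dots,H_n\}$, $n\ge2$, and $K_i$ is a construction of $H_i$, then $K_1\cup\dots\cup K_n$ is a construction of $H$. For $X\in K$, an element $x\in X$ is $X$-superficial (relative to $K$) if $x\notin Z$ for every $Z\in K$ that is a proper subset of $X$. *)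

(* Defs.v *)
From mathcomp Require Import all_boot.
Set Implicit Arguments. Unset Strict Implicit. Unset Printing Implicit Defensive.

Section Hyper.
Variable T : finType.
Implicit Types (H K F : {set {set T}}) (X Y : {set T}) (P : {set {set {set T}}}).

(* A hypergraph: a finite set of nonempty subsets; carrier = cover H. *)
Definition hypergraph H : bool := set0 \notin H.

Definition restrict F Y : {set {set T}} := [set X in F | X \subset Y].

(* A hypergraph partition of H: a partition {H_1..H_n} of the set H such that
   the unions of distinct blocks are pairwise disjoint (so that
   {U H_1, ..., U H_n} is a partition of U H). *)
Definition hpartition H P : bool :=
  partition P H &&
  [forall B1 in P, forall B2 in P, (B1 != B2) ==> [disjoint cover B1 & cover B2]].

Definition connected H : Prop := exists! P, hpartition H P.

Definition atomic H : Prop := forall x, x \in cover H -> [set x] \in H.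

Definition saturated H : Prop :=
  forall X1 X2, X1 \in H -> X2 \in H -> X1 :&: X2 != set0 -> X1 :|: X2 \in H.

Definition ASC H : Prop := atomic H /\ saturated H /\ connected H.

(* Constructions (for atomic H; subhypergraphs F_Y and blocks of partitions
   of atomic hypergraphs are again atomic). *)
Inductive construction : {set {set T}} -> {set {set T}} -> Prop :=
| constr0 : construction set0 set0
| constr1 H x K :
    connected H -> x \in cover H ->
    construction (restrict H (cover H :\ x)) K ->
    construction H (cover H |: K)
| constr2 H P (Ks : {set {set T}} -> {set {set T}}) :
    ~ connected H ->
    hpartition H P ->
    (forall B, B \in P -> connected B) ->
    1 < #|P| ->
    (forall B, B \in P -> construction B (Ks B)) ->
    construction H (\bigcup_(B in P) Ks B).

Definition superficial K X (x : T) : Prop :=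
  x \in X /\ forall Z, Z \in K -> Z \proper X -> x \notin Z.

End Hyper.

(* Main.v *)
Require Import Defs.
From mathcomp Require Import all_boot.
Set Implicit Arguments.

Lemma cover_restrict (T : finType) (H : {set {set T}}) (S : {set T}) :
  cover (restrict H S) \subset S.
Proof.
apply/subsetP=> y /bigcupP[Z]; rewrite inE => /andP[_ ZS] yZ.
exact: (subsetP ZS).
Qed.

Lemma constr_sub (T : finType) (H K : {set {set T}}) :
  construction H K -> forall Z, Z \in K -> Z \subset cover H.
Proof.
elim=> {H K}.
- by move=> Z; rewrite inE.
- move=> H x K _ _ _ IH Z; rewrite in_setU1 => /orP[/eqP -> //|ZK].
  apply: subset_trans (IH _ ZK) _.
  exact: (subset_trans (cover_restrict _ _) (subD1set _ _)).
- move=> H P Ks _ /andP[/and3P[/eqP cP _ _] _] _ _ _ IH Z /bigcupP[B BP ZK].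
  apply: subset_trans (IH _ BP _ ZK) _.
  apply/subsetP=> y /bigcupP[W WB yW]; apply/bigcupP; exists W => //.
  by rewrite -cP; apply/bigcupP; exists B.
Qed.

Lemma main_gen (T : finType) (H K : {set {set T}}) :
  construction H K -> forall Y, Y \in H -> Y \notin K ->
  exists X, [/\ X \in K, Y \proper X & exists x, superficial K X x /\ x \in Y].
Proof.
move=> C; elim: C => {H K}.
- by move=> Y; rewrite inE.
- move=> H x K _ xH CK IH Y YH; rewrite in_setU1 negb_or => /andP[YnH YnK].
  have YsH : Y \subset cover H by apply/subsetP=> y yY; apply/bigcupP; exists Y.
  have Ksub : forall Z, Z \in K -> Z \subset cover H :\ x.
    move=> Z ZK; apply: subset_trans (constr_sub CK ZK) _; exact: cover_restrict.
  case xY: (x \in Y).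
  + exists (cover H); split; first by rewrite setU11.
    * by rewrite properEneq YnH YsH.
    exists x; split=> //; split=> // Z; rewrite in_setU1 => /orP[/eqP ->|ZK].
      by rewrite properE subxx.
    move=> _; apply/negP=> xZ; have := subsetP (Ksub _ ZK) _ xZ.
    by rewrite in_setD1 eqxx.
  + have YR : Y \in restrict H (cover H :\ x).
      by rewrite inE YH subsetD1 YsH xY.
    have [X [XK YX [x' [[x'X sup] x'Y]]]] := IH Y YR YnK.
    exists X; split; first by rewrite in_setU1 XK orbT.
      done.
    exists x'; split=> //; split=> // Z; rewrite in_setU1 => /orP[/eqP ->|ZK].
      move=> /proper_sub_trans H1.
      have := H1 _ (subset_trans (Ksub _ XK) (subD1set _ _)).
      by rewrite properE subxx.
    exact: sup.
- move=> H P Ks _ /andP[/and3P[/eqP cP _ _] /forallP dis] _ _ CB IH Y YH YnK.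
  move: YH; rewrite -cP => /bigcupP[B BP YB].
  have YnB : Y \notin Ks B.
    by apply: contra YnK => YK; apply/bigcupP; exists B.
  have [X [XK YX [x [[xX sup] xY]]]] := IH B BP Y YB YnB.
  exists X; split; first by apply/bigcupP; exists B.
    done.
  exists x; split=> //; split=> // Z /bigcupP[B' B'P ZK] ZX.
  case: (eqVneq B B') => [eqBB|neq]; first by subst B'; exact: sup.
  apply/negP=> xZ.
  have h := dis B; rewrite BP /= in h; have := forallP h B'.
  rewrite B'P neq /= => D.
  have xB : x \in cover B by apply: (subsetP (constr_sub (CB _ BP) XK)).
  have xB' : x \in cover B' by apply: (subsetP (constr_sub (CB _ B'P) ZK)).
  by rewrite (disjointFr D xB) in xB'.
Qed.

Theorem lemma6p14 (T : finType) (H K : {set {set T}}) (Y : {set T}) :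
  hypergraph H -> ASC H -> construction H K -> Y \in H :\: K ->
  exists X, [/\ X \in K, Y \proper X & exists x, superficial K X x /\ x \in Y].
Proof.
move=> _ _ C; rewrite inE => /andP[YnK YH]; exact: main_gen C Y YH YnK.
Qed.
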